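(* Let $R$ be an (irreducible) ADE lattice of rank $n\ge 9$. Then $U\oplus R$ contains a sublattice isometric to $U\oplus E_8$.
   Context: Lattices are even, integral, non-degenerate. $U$ denotes the even unimodular hyperbolic lattice of rank 2 (Gram matrix $\begin{pmatrix}0&1\\1&0\end{pmatrix}$). ADE lattices $A_n$ ($n\ge1$), $D_n$ ($n\ge4$), $E_6,E_7,E_8$ are the negative definite root lattices whose Gram matrix, in the standard basis of roots $r_1,\dots,r_n$, is $-1$ times the Cartan matrix of the corresponding Dynkin diagram (so $r_i^2=-2$, $r_i.r_j=1$ if $i\ne j$ are adjacent, $0$ otherwise). *)

(* Defs.v *)
(* Even lattices are encoded by integer Gram matrices. *)
From mathcomp Require Import all_boot all_order all_algebra.
Set Implicit Arguments. Unset Strict Implicit. Unset Printing Implicit Defensive.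
Import GRing.Theory Num.Theory.
Local Open Scope ring_scope.

Inductive ADE_type := A_ of nat | D_ of nat | E6 | E7 | E8.

Definition ADE_rank (t : ADE_type) : nat :=
  match t with A_ n => n | D_ n => n | E6 => 6 | E7 => 7 | E8 => 8 end.

Definition ADE_valid (t : ADE_type) : bool :=
  match t with A_ n => (1 <= n)%N | D_ n => (4 <= n)%N | _ => true end.

Definition path_adj (m i j : nat) : bool :=
  [&& (i < m)%N, (j < m)%N & ((i.+1 == j) || (j.+1 == i))].

(* Adjacency of the Dynkin diagram, nodes 0 .. rank-1:
   A_n : path 0-1-...-(n-1);
   D_n : path 0-...-(n-2), plus node n-1 attached to node n-3;
   E_n : path 0-...-(n-2), plus node n-1 attached to node 2. *)
Definition ADE_adj (t : ADE_type) (i j : nat) : bool :=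
  match t with
  | A_ n => path_adj n i j
  | D_ n => path_adj n.-1 i j ||
            ((i == n.-1) && (j == n - 3)%N) || ((j == n.-1) && (i == n - 3)%N)
  | E6 => path_adj 5 i j || ((i == 5%N) && (j == 2%N)) || ((j == 5%N) && (i == 2%N))
  | E7 => path_adj 6 i j || ((i == 6%N) && (j == 2%N)) || ((j == 6%N) && (i == 2%N))
  | E8 => path_adj 7 i j || ((i == 7%N) && (j == 2%N)) || ((j == 7%N) && (i == 2%N))
  end.

(* Gram matrix = - Cartan matrix (negative definite). *)
Definition ADE_gram (t : ADE_type) : 'M[int]_(ADE_rank t) :=
  \matrix_(i, j) (if i == j then (-2)%R
                  else if ADE_adj t i j then 1%R else 0%R).

Definition U_gram : 'M[int]_2 :=
  \matrix_(i, j) (if i == j then 0%R else 1%R).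

Definition osum (m n : nat) (A : 'M[int]_m) (B : 'M[int]_n) : 'M[int]_(m + n) :=
  block_mx A 0 0 B.

(* The lattice with Gram matrix G contains a sublattice isometric to the lattice
   with Gram matrix H: there are k vectors (rows of X, in coordinates of the
   basis of the first lattice) whose Gram matrix is H and which are linearly
   independent (so they form a basis of a sublattice isometric to H). *)
Definition contains_isometric (n k : nat) (G : 'M[int]_n) (H : 'M[int]_k) : Prop :=
  exists X : 'M[int]_(k, n),
    X *m G *m X^T = H /\ row_free (map_mx (fun z : int => z%:~R : rat) X).

(* Main.v *)
Require Import Defs.
From mathcomp Require Import all_boot all_order all_algebra zify.
Import GRing.Theory.
Local Open Scope ring_scope.

Definition lsum (m : nat) (F : nat -> int) : int := foldr (fun j acc => F j + acc) 0 (iota 0 m).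
Lemma lsumE m F : \sum_(0 <= j < m) F j = lsum m F.
Proof. by rewrite /index_iota subn0 unlock. Qed.
Lemma sum_ord m (F : nat -> int) : \sum_(j < m) F j = lsum m F.
Proof. by rewrite -(big_mkord xpredT F) lsumE. Qed.
Lemma sum_cut N (F : nat -> int) : (11 <= N)%N -> (forall j, (11 <= j)%N -> F j = 0) ->
  \sum_(j < N) F j = lsum 11 F.
Proof.
move=> HN HF. rewrite -(big_mkord xpredT F) (big_cat_nat (leq0n 11) HN) /= lsumE.
rewrite big_nat_cond big1 ?addr0 // => j /andP[/andP[Hj _] _]; exact: HF.
Qed.

Definition gf (t : ADE_type) (i j : nat) : int :=
  if (i < 2)%N && (j < 2)%N then (if i == j then 0 else 1)
  else if (2 <= i)%N && (2 <= j)%N then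
    (if i == j then (-2)%R else if ADE_adj t (i - 2) (j - 2) then 1 else 0)
  else 0.

Lemma osum_entry t (i j : 'I_(2 + ADE_rank t)) :
  osum U_gram (ADE_gram t) i j = gf t i j.
Proof.
rewrite /osum /gf.
rewrite -[i]splitK -[j]splitK.
case: (split i) => i'; case: (split j) => j' /=;
  rewrite ?block_mxEul ?block_mxEur ?block_mxEdl ?block_mxEdr !mxE /=.
- by rewrite !ltn_ord.
- have -> : (2 + j' < 2)%N = false by lia.
  have -> : (1 < i')%N = false by have := ltn_ord i'; lia.
  by rewrite /= andbF.
- have -> : (1 < j')%N = false by have := ltn_ord j'; lia.
  done.
- by rewrite eqn_add2l !addKn.
Qed.

Definition ent (s : seq (seq int)) (i j : nat) : int := nth 0 (nth [::] s i) j.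
Definition mk m n (s : seq (seq int)) : 'M[int]_(m,n) := \matrix_(i,j) ent s i j.

Lemma eq_lsum m F G : (forall j, (j < m)%N -> F j = G j) -> lsum m F = lsum m G.
Proof.
move=> H; rewrite -!lsumE; apply: eq_big_nat => j /andP[_ Hj]; exact: H.
Qed.

Definition chk_gram t0 (Xl : seq (seq int)) : bool :=
  all (fun r => size r <= 11)%N Xl &&
  all (fun i => all (fun k =>
     lsum 11 (fun l => lsum 11 (fun j => ent Xl i j * gf t0 j l) * ent Xl k l)
       == gf E8 i k) (iota 0 10)) (iota 0 10).

Definition chk_inv (Hl : seq (seq int)) : bool :=
  all (fun i => all (fun k =>
     lsum 10 (fun j => gf E8 i j * ent Hl j k) == (i == k)%:R) (iota 0 10)) (iota 0 10).

Lemma main_gen t t0 Xl Hl : (11 <= 2 + ADE_rank t)%N ->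
  (forall a c, (a < 11)%N -> (c < 11)%N -> gf t a c = gf t0 a c) ->
  chk_gram t0 Xl -> chk_inv Hl ->
  contains_isometric (osum U_gram (ADE_gram t)) (osum U_gram (ADE_gram E8)).
Proof.
move=> HN Hag /andP[Hsz Hg] Hinv.
have HX0 : forall k l, (11 <= l)%N -> ent Xl k l = 0.
  move=> k l Hl'; rewrite /ent.
  case: (ltnP k (size Xl)) => Hk.
    rewrite nth_default //; apply: leq_trans _ Hl'; exact: (allP Hsz _ (mem_nth _ Hk)).
  by rewrite (nth_default [::] Hk) nth_nil.
set X := mk 10 (2 + ADE_rank t) Xl.
have Hgram : X *m osum U_gram (ADE_gram t) *m X^T = osum U_gram (ADE_gram E8).
  apply/matrixP => i k; rewrite (osum_entry E8) mxE.
  rewrite /X /mk.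
  under eq_bigr => l _ do rewrite !mxE.
  under eq_bigr => l _ do under eq_bigr => j _ do rewrite mxE osum_entry.
  rewrite (@sum_cut _ (fun l => (\sum_(j < 2 + ADE_rank t) ent Xl i j * gf t j l) * ent Xl k l)) //; last first.
    by move=> l Hl2; rewrite HX0 // mulr0.
  rewrite (@eq_lsum _ _ (fun l => lsum 11 (fun j => ent Xl i j * gf t0 j l) * ent Xl k l)).
    apply/eqP; have := allP Hg i; rewrite mem_iota ltn_ord => /(_ isT) /allP /(_ k).
    by rewrite mem_iota ltn_ord => /(_ isT).
  move=> l Hl2; congr (_ * _).
  rewrite (@sum_cut _ (fun j => ent Xl i j * gf t j l)) //.
    by apply: eq_lsum => j Hj; rewrite Hag.
  by move=> j Hj; rewrite HX0 // mul0r.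
exists X; split => //.
apply/row_freeP.
exists (map_mx (fun z : int => z%:~R : rat) (osum U_gram (ADE_gram t) *m X^T *m mk 10 10 Hl)).
rewrite -map_mxM !mulmxA Hgram.
have -> : osum U_gram (ADE_gram E8) *m mk 10 10 Hl = 1%:M.
  apply/matrixP => i k; rewrite !mxE.
  under eq_bigr => j _ do rewrite (osum_entry E8) mxE.
  rewrite (@sum_ord _ (fun j => gf E8 i j * ent Hl j k)).
  apply/eqP; have := allP Hinv i; rewrite mem_iota ltn_ord => /(_ isT) /allP /(_ k).
  by rewrite mem_iota ltn_ord => /(_ isT).
by rewrite map_scalar_mx rmorph1.
Qed.

Definition XA : seq (seq int) := [:: [:: (-3); (-27); (-2); (-4); (-6); (-8); (-10); (-12); (-14); (-16); (-9)];
  [:: (-3); (-28); (-2); (-4); (-6); (-8); (-10); (-12); (-14); (-16); (-10)];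
  [:: 0; 0; 1; 0; 0; 0; 0; 0; 0; 0; 0];
  [:: 0; 0; 0; 1; 0; 0; 0; 0; 0; 0; 0];
  [:: 0; 0; 0; 0; 1; 0; 0; 0; 0; 0; 0];
  [:: 0; 0; 0; 0; 0; 1; 0; 0; 0; 0; 0];
  [:: 0; 0; 0; 0; 0; 0; 1; 0; 0; 0; 0];
  [:: 0; 0; 0; 0; 0; 0; 0; 1; 0; 0; 0];
  [:: 0; 0; 0; 0; 0; 0; 0; 0; 1; 0; 0];
  [:: 1; 8; 0; 0; 0; 1; 2; 3; 4; 5; 3]].
Definition XD : seq (seq int) := [:: [:: (-2); (-3); (-1); (-2); (-3); (-4); (-5); (-6); (-7); (-3); (-5)];
  [:: (-3); (-6); (-2); (-4); (-6); (-8); (-10); (-12); (-14); (-7); (-9)];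
  [:: 0; 0; 1; 0; 0; 0; 0; 0; 0; 0; 0];
  [:: 0; 0; 0; 1; 0; 0; 0; 0; 0; 0; 0];
  [:: 0; 0; 0; 0; 1; 0; 0; 0; 0; 0; 0];
  [:: 0; 0; 0; 0; 0; 1; 0; 0; 0; 0; 0];
  [:: 0; 0; 0; 0; 0; 0; 1; 0; 0; 0; 0];
  [:: 0; 0; 0; 0; 0; 0; 0; 1; 0; 0; 0];
  [:: 0; 0; 0; 0; 0; 0; 0; 0; 1; 0; 0];
  [:: 1; 2; 0; 0; 0; 1; 2; 3; 4; 2; 3]].
Definition HL : seq (seq int) := [:: [:: 0; 1; 0; 0; 0; 0; 0; 0; 0; 0];
  [:: 1; 0; 0; 0; 0; 0; 0; 0; 0; 0];
  [:: 0; 0; (-4); (-7); (-10); (-8); (-6); (-4); (-2); (-5)];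
  [:: 0; 0; (-7); (-14); (-20); (-16); (-12); (-8); (-4); (-10)];
  [:: 0; 0; (-10); (-20); (-30); (-24); (-18); (-12); (-6); (-15)];
  [:: 0; 0; (-8); (-16); (-24); (-20); (-15); (-10); (-5); (-12)];
  [:: 0; 0; (-6); (-12); (-18); (-15); (-12); (-8); (-4); (-9)];
  [:: 0; 0; (-4); (-8); (-12); (-10); (-8); (-6); (-3); (-6)];
  [:: 0; 0; (-2); (-4); (-6); (-5); (-4); (-3); (-2); (-3)];
  [:: 0; 0; (-5); (-10); (-15); (-12); (-9); (-6); (-3); (-8)]].
Lemma chkA : chk_gram (A_ 9) XA. Proof. by vm_compute. Qed.
Lemma chkD : chk_gram (D_ 9) XD. Proof. by vm_compute. Qed.
Lemma chkH : chk_inv HL. Proof. by vm_compute. Qed.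

Lemma agreeA n a c : (9 <= n)%N -> (a < 11)%N -> (c < 11)%N -> gf (A_ n) a c = gf (A_ 9) a c.
Proof.
move=> Hn Ha Hc; rewrite /gf /= /path_adj.
case: ifP => // _; case: ifP => // /andP[Ha2 Hc2].
have -> : (a - 2 < n)%N = true by lia.
have -> : (c - 2 < n)%N = true by lia.
have -> : (a - 2 < 9)%N = true by lia.
by have -> : (c - 2 < 9)%N = true by lia.
Qed.

Lemma agreeD n a c : (10 <= n)%N -> (a < 11)%N -> (c < 11)%N -> gf (D_ n) a c = gf (A_ 9) a c.
Proof.
move=> Hn Ha Hc; rewrite /gf /= /path_adj.
case: ifP => // _; case: ifP => // /andP[Ha2 Hc2].
have -> : (a - 2 < n.-1)%N = true by lia.
have -> : (c - 2 < n.-1)%N = true by lia.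
have -> : (a - 2 < 9)%N = true by lia.
have -> : (c - 2 < 9)%N = true by lia.
have -> : (subn a 2 == n.-1) = false by lia.
have -> : (subn c 2 == n.-1) = false by lia.
by rewrite !orbF.
Qed.

Theorem proposition2p1 (R : ADE_type) :
  ADE_valid R -> (9 <= ADE_rank R)%N ->
  contains_isometric (osum U_gram (ADE_gram R)) (osum U_gram (ADE_gram E8)).
Proof.
case: R => [n|n|||] _ //= Hr.
- apply: (@main_gen (A_ n) (A_ 9) XA HL _ _ chkA chkH).
    by rewrite /=; lia.
  by move=> a c; apply: agreeA.
- case: (ltnP 9 n) => Hn.
    apply: (@main_gen (D_ n) (A_ 9) XA HL _ _ chkA chkH).
      by rewrite /=; lia.
    by move=> a c; apply: agreeD.
  have E : n = 9%N by lia.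
  subst n.
  by apply: (@main_gen (D_ 9) (D_ 9) XD HL _ _ chkD chkH).
Qed.
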